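(* Let $n\ge 3$ and let $k\in[1..n-2]$ be coprime to $n$. Then there are exactly three strings $\mathsf{T}$ of length $n$ over $\{\mathtt{a},\mathtt{b}\}$ ($\mathtt{a}<\mathtt{b}$) whose suffix array $\mathsf{SA}_{\mathsf{T}}=[p_1,\ldots,p_n]$ is an arithmetically progressed permutation with ratio $k$. Each such $\mathsf{T}$ has the form $\mathsf{T}[i]=\mathtt{a}$ if $i\in\{p_1,\ldots,p_s\}$ and $\mathsf{T}[i]=\mathtt{b}$ otherwise, for some $s\in[1..n-1]$ (so $p_s$ is the start of the lexicographically largest suffix beginning with $\mathtt{a}$), and the three strings are determined by: (1) $p_1=n$ and $p_s=n-k-1$; (2) $p_1=k+1$ and $p_s=n-k$; (3) $p_1=1$ and $p_s=n-k$. The strings in cases (1) and (2) have period $n-k$, and the string in case (3) is a Lyndon word.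
   Context: Lexicographic order with a proper prefix smaller than the longer string; suffix array $\mathsf{SA}_{\mathsf{T}}$: permutation of $[1..n]$ such that $\mathsf{T}[\mathsf{SA}_{\mathsf{T}}[i]..n]$ is the $i$-th smallest suffix. $x\bmod n$ denotes the representative of $x$ modulo $n$ in $[1..n]$. An arithmetically progressed permutation of length $n$ with ratio $k\in[1..n-1]$ is a permutation $P=[p_1,\ldots,p_n]$ of $[1..n]$ with $p_{i+1}=p_i+k\bmod n$. A string $\mathsf{T}$ of length $n$ has period $p\in[1..n-1]$ if $\mathsf{T}[i]=\mathsf{T}[i+p]$ for all $i\in[1..n-p]$. A Lyndon word is a string that is strictly smaller in lexicographic order than all its other cyclic rotations. *)

(* Defs.v *)
From mathcomp Require Import all_boot.
Set Implicit Arguments. Unset Strict Implicit. Unset Printing Implicit Defensive.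

(* Strings over {a,b} are [seq bool]: a = false, b = true, so a < b.
   Positions are 1-based as in the paper: T[i] = nth false T i.-1. *)

Fixpoint lex_lt (s t : seq bool) : bool :=
  match s, t with
  | [::], [::] => false
  | [::], _ :: _ => true
  | _ :: _, [::] => false
  | x :: s', y :: t' => (~~ x && y) || ((x == y) && lex_lt s' t')
  end.

Definition suffix (T : seq bool) (i : nat) : seq bool := drop i.-1 T.

Definition is_SA (T : seq bool) (p : seq nat) : Prop :=
  perm_eq p (iota 1 (size T)) /\ sorted lex_lt [seq suffix T i | i <- p].

Definition modn1 (x n : nat) : nat := (x.-1 %% n).+1.

Definition is_APP (n k : nat) (p : seq nat) : Prop :=
  [/\ perm_eq p (iota 1 n), 1 <= k <= n.-1 &
      forall i, i.+1 < n -> nth 0 p i.+1 = modn1 (nth 0 p i + k) n].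

Definition has_period (T : seq bool) (q : nat) : Prop :=
  1 <= q <= (size T).-1 /\
  forall i, i + q < size T -> nth false T i = nth false T (i + q).

Definition lyndon (T : seq bool) : Prop :=
  forall r, 0 < r < size T -> lex_lt T (rot r T).

Definition ab_string (n : nat) (p : seq nat) (s : nat) : seq bool :=
  mkseq (fun i => i.+1 \notin take s p) n.

(* Main.v *)
Require Import Defs.
From mathcomp Require Import all_boot zify.

Notation sfx := Defs.suffix.

Lemma lex_nil_r s : lex_lt s [::] = false.
Proof. by case: s. Qed.

Lemma lex_trans : transitive lex_lt.
Proof.
move=> t s u; elim: s t u => [|x s IH] [|y t] [|z u] //=.
case: x y z => [] [] [] //=; exact: IH.
Qed.

Lemma lex_asym s t : lex_lt s t -> lex_lt t s -> False.
Proof.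
elim: s t => [|x s IH] [|y t] //=.
by case: x y => [] [] //=; exact: IH.
Qed.

Lemma lex_cat s t v : lex_lt s t -> size t <= size s -> lex_lt s (t ++ v).
Proof.
elim: s t => [|x s IH] [|y t] //=.
case: x y => [] [] //= H Hs; exact: IH.
Qed.

Lemma suffixE T j : 1 <= j <= size T ->
  sfx T j = nth false T j.-1 :: sfx T j.+1.
Proof.
move=> /andP [H1 H2]; rewrite /Defs.suffix (drop_nth false); last by lia.
by congr (_ :: drop _ _); lia.
Qed.

Lemma sfx_end T : sfx T (size T).+1 = [::].
Proof. by rewrite /Defs.suffix drop_size. Qed.

Lemma sorted_PS (T : seq bool) (p : seq nat) :
  sorted lex_lt [seq sfx T i | i <- p] <->
  (forall a b, a < b < size p ->
     lex_lt (sfx T (nth 0 p a)) (sfx T (nth 0 p b))).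
Proof.
rewrite sorted_pairwise; last exact: lex_trans.
split.
  move=> /(pairwiseP [::]) H a b /andP [Hab Hb].
  have Ha : a < size p by lia.
  have := H a b; rewrite size_map !(nth_map 0) //; apply => //.
move=> H; apply/(pairwiseP [::]) => a b; rewrite size_map !inE /= => Ha Hb Hab.
rewrite !(nth_map 0) //; apply: H; lia.
Qed.

Definition Gen (T : seq bool) (p : seq nat) n (R : nat -> nat) :=
  [/\ size T = n, size p = n,
      (forall a, a < n -> 0 < nth 0 p a <= n),
      (forall a, a < n -> R (nth 0 p a) = a) &
      (forall j, 0 < j <= n -> R j < n /\ nth 0 p (R j) = j)].

Definition LC (T : seq bool) (p : seq nat) n (R : nat -> nat) :=
  forall a b, a < b < n ->
    (nth false T (nth 0 p a).-1 -> nth false T (nth 0 p b).-1) /\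
    (nth false T (nth 0 p a).-1 = nth false T (nth 0 p b).-1 ->
       nth 0 p b <> n /\
       (nth 0 p a <> n -> R (nth 0 p a).+1 < R (nth 0 p b).+1)).

Lemma PS_LC T p n R : Gen T p n R ->
  (forall a b, a < b < n ->
     lex_lt (sfx T (nth 0 p a)) (sfx T (nth 0 p b))) -> LC T p n R.
Proof.
case=> HT Hp HP HRP HPR PS a b Hab.
have Ha : a < n by lia.
have Hb : b < n by case/andP: Hab.
have := PS a b Hab.
rewrite (suffixE T (nth 0 p a)) ?HT ?HP // (suffixE T (nth 0 p b)) ?HT ?HP //=.
set x := nth false T _; set y := nth false T _.
move=> H; split; first by move: H; case: x; case: y.
move=> Exy; have {}H : lex_lt (sfx T (nth 0 p a).+1) (sfx T (nth 0 p b).+1).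
  by move: H; rewrite Exy; case: y {Exy}.
have HPb := HP b Hb; have HPa := HP a Ha.
have Pbn : nth 0 p b <> n.
  by move=> E; move: H; rewrite E -HT sfx_end lex_nil_r.
split => // Pan.
have [H1 H2] := HPR (nth 0 p a).+1 ltac:(lia).
have [H3 H4] := HPR (nth 0 p b).+1 ltac:(lia).
case: (ltngtP (R (nth 0 p a).+1) (R (nth 0 p b).+1)) => // C.
  have := PS _ _ (introT andP (conj C H1)).
  rewrite H2 H4 => H'; case: (lex_asym _ _ H H').
have E : nth 0 p a = nth 0 p b by move: H2; rewrite C H4; case.
have := HRP a Ha; have := HRP b Hb; rewrite E; lia.
Qed.

Lemma LC_PS T p n R : Gen T p n R -> LC T p n R ->
  (forall a b, a < b < n ->
     lex_lt (sfx T (nth 0 p a)) (sfx T (nth 0 p b))).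
Proof.
case=> HT Hp HP HRP HPR LC.
suff H : forall d a b, n - nth 0 p a < d -> a < b < n ->
     lex_lt (sfx T (nth 0 p a)) (sfx T (nth 0 p b)).
  by move=> a b Hab; apply: (H n.+1 a b) => //; lia.
elim=> [|d IH] a b Hd Hab.
  have Ha : a < n by lia.
  have := HP a Ha; lia.
have Ha : a < n by lia.
have Hb : b < n by case/andP: Hab.
have HPb := HP b Hb; have HPa := HP a Ha.
have [L1 L2] := LC a b Hab.
rewrite (suffixE T (nth 0 p a)) ?HT ?HP // (suffixE T (nth 0 p b)) ?HT ?HP //=.
move: L1 L2; set x := nth false T _; set y := nth false T _.
case: x; case: y => //= L1 L2; rewrite ?orbF; try by have := L1 erefl.
- have [Pbn Hr] := L2 erefl.
  have [Pan|Pan] := eqVneq (nth 0 p a) n.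
    rewrite Pan -HT sfx_end.
    rewrite (suffixE T (nth 0 p b).+1) ?HT //; lia.
  have [H1 H2] := HPR (nth 0 p a).+1 ltac:(lia).
  have [H3 H4] := HPR (nth 0 p b).+1 ltac:(lia).
  rewrite -H2 -H4; apply: IH; [rewrite H2; lia | apply/andP; split => //].
  exact: Hr (elimN eqP Pan).
- have [Pbn Hr] := L2 erefl.
  have [Pan|Pan] := eqVneq (nth 0 p a) n.
    rewrite Pan -HT sfx_end.
    rewrite (suffixE T (nth 0 p b).+1) ?HT //; lia.
  have [H1 H2] := HPR (nth 0 p a).+1 ltac:(lia).
  have [H3 H4] := HPR (nth 0 p b).+1 ltac:(lia).
  rewrite -H2 -H4; apply: IH; [rewrite H2; lia | apply/andP; split => //].
  exact: Hr (elimN eqP Pan).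
Qed.

Definition Pf n k c a := ((c.-1 + a * k) %% n).+1.
Definition Rf n m c j := ((j.-1 + n - c.-1) * m) %% n.

Lemma mk1 n m k X : (m * k) %% n = 1 -> (X * k * m) %% n = X %% n.
Proof. by move=> H; rewrite -mulnA (mulnC k m) -modnMmr H muln1. Qed.

Lemma mk2 n m k X : (m * k) %% n = 1 -> (X * m * k) %% n = X %% n.
Proof. by move=> H; rewrite -mulnA -modnMmr H muln1. Qed.

Lemma F1 n k m c a : 1 < n -> (m * k) %% n = 1 -> 0 < c <= n -> a < n ->
  Rf n m c (Pf n k c a) = a.
Proof.
move=> Hn Hmk Hc Ha; rewrite /Rf /Pf /=.
set Y := (c.-1 + a * k) %% n.
have E : Y + n - c.-1 = a * k %[mod n].
  apply/eqP; rewrite -(eqn_modDr c.-1).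
  have -> : Y + n - c.-1 + c.-1 = Y + n by lia.
  by rewrite modnDr /Y modn_mod addnC.
by rewrite -modnMml E modnMml mk1 // modn_small.
Qed.

Lemma F2 n k m c j : 1 < n -> (m * k) %% n = 1 -> 0 < c <= n -> 0 < j <= n ->
  Rf n m c j < n /\ Pf n k c (Rf n m c j) = j.
Proof.
move=> Hn Hmk Hc Hj; split; first by rewrite /Rf ltn_mod; lia.
rewrite /Rf /Pf.
rewrite -modnDmr modnMml mk2 // modnDmr.
have -> : c.-1 + (j.-1 + n - c.-1) = j.-1 + n by lia.
rewrite modnDr modn_small; lia.
Qed.

Lemma F4 n m c j : 0 < j -> 0 < c <= n ->
  Rf n m c j.+1 = (Rf n m c j + m) %% n.
Proof.
move=> Hj Hc; rewrite /Rf modnDml.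
have -> : j.+1.-1 + n - c.-1 = (j.-1 + n - c.-1).+1 by lia.
by rewrite mulSn addnC.
Qed.

Definition pseq n k c := mkseq (Pf n k c) n.

Lemma nth_pseq n k c a : a < n -> nth 0 (pseq n k c) a = Pf n k c a.
Proof. by move=> Ha; rewrite /pseq nth_mkseq. Qed.

Lemma size_pseq n k c : size (pseq n k c) = n.
Proof. by rewrite size_mkseq. Qed.

Lemma Pf_range n k c a : 0 < n -> 0 < Pf n k c a <= n.
Proof. by move=> Hn; rewrite /Pf /= ltn_mod. Qed.

Lemma pseq_uniq n k m c : 1 < n -> (m * k) %% n = 1 -> 0 < c <= n ->
  uniq (pseq n k c).
Proof.
move=> Hn Hmk Hc; rewrite /pseq /mkseq map_inj_in_uniq ?iota_uniq //.
move=> a b; rewrite !mem_iota /= !add0n => Ha Hb E.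
by rewrite -(F1 _ _ _ _ _ Hn Hmk Hc Ha) E F1.
Qed.

Lemma pseq_perm n k m c : 1 < n -> (m * k) %% n = 1 -> 0 < c <= n ->
  perm_eq (pseq n k c) (iota 1 n).
Proof.
move=> Hn Hmk Hc.
have U := pseq_uniq _ _ _ _ Hn Hmk Hc.
have S : {subset pseq n k c <= iota 1 n}.
  move=> x /mapP [a _ ->]; rewrite mem_iota; have := Pf_range n k c a (ltnW Hn); lia.
have [_ E] := uniq_min_size U S ltac:(by rewrite size_iota size_pseq).
by apply: uniq_perm => //; rewrite iota_uniq.
Qed.

Lemma pseq_APP n k m c : 1 < n -> (m * k) %% n = 1 -> 0 < c <= n ->
  1 <= k <= n.-1 -> is_APP n k (pseq n k c).
Proof.
move=> Hn Hmk Hc Hk; split => //; first exact: (pseq_perm _ _ _ _ Hn Hmk Hc).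
move=> i Hi; rewrite !nth_pseq //; last lia.
rewrite /Defs.modn1 /Pf addSn /= modnDml; congr (_ %% _).+1; rewrite mulSn; lia.
Qed.

Lemma APP_pseq n k p : 0 < n -> is_APP n k p ->
  0 < nth 0 p 0 <= n /\ p = pseq n k (nth 0 p 0).
Proof.
move=> Hn [Hp Hk Hr].
have Sp : size p = n by rewrite (perm_size Hp) size_iota.
have Hc : 0 < nth 0 p 0 <= n.
  have : nth 0 p 0 \in iota 1 n by rewrite -(perm_mem Hp) mem_nth // Sp.
  rewrite mem_iota; lia.
split => //; apply: (@eq_from_nth _ 0); first by rewrite Sp size_pseq.
move=> i; rewrite Sp => Hi; rewrite nth_pseq //.
elim: i Hi => [|i IH] Hi.
  by rewrite /Pf mul0n addn0 modn_small; lia.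
rewrite Hr // IH; last lia.
rewrite /Defs.modn1 /Pf addSn /= modnDml; congr (_ %% _).+1; rewrite mulSn; lia.
Qed.


Lemma pseq_Gen T n k m c : 1 < n -> (m * k) %% n = 1 -> 0 < c <= n ->
  size T = n -> Gen T (pseq n k c) n (Rf n m c).
Proof.
move=> Hn Hmk Hc HT; split => //.
- exact: size_pseq.
- by move=> a Ha; rewrite nth_pseq // Pf_range //; lia.
- by move=> a Ha; rewrite nth_pseq // F1.
- move=> j Hj; have [H1 H2] := F2 n k m c j Hn Hmk Hc Hj.
  by rewrite nth_pseq.
Qed.

Lemma index_pseq n k m c j : 1 < n -> (m * k) %% n = 1 -> 0 < c <= n ->
  0 < j <= n -> index j (pseq n k c) = Rf n m c j.
Proof.
move=> Hn Hmk Hc Hj; have [H1 H2] := F2 n k m c j Hn Hmk Hc Hj.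
rewrite -{1}H2 -nth_pseq // index_uniq ?size_pseq //.
exact: (pseq_uniq _ _ _ _ Hn Hmk Hc).
Qed.

Lemma ab_letter n k m c s j : 1 < n -> (m * k) %% n = 1 -> 0 < c <= n ->
  0 < j <= n ->
  nth false (ab_string n (pseq n k c) s) j.-1 = (s <= Rf n m c j).
Proof.
move=> Hn Hmk Hc Hj; rewrite /ab_string nth_mkseq; last lia.
have -> : j.-1.+1 = j by lia.
have [H1 H2] := F2 n k m c j Hn Hmk Hc Hj.
rewrite in_take; last by rewrite -H2 -nth_pseq // mem_nth // size_pseq.
by rewrite (index_pseq _ _ m) // -leqNgt.
Qed.

Lemma inv_exists n k : 2 < n -> 1 <= k <= n - 2 -> coprime k n ->
  exists m, [/\ (m * k) %% n = 1, 1 <= m & m <= n - 2].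
Proof.
move=> Hn Hk Hco.
have [a Ha Hd] := Bezoutl k (ltnW (ltnW Hn)).
move: Hd; rewrite gcdnC (eqP Hco) => Hd.
have Ha0 : 0 < a.
  case: a Ha Hd => // _; rewrite mul0n addn0 dvdn1; lia.
have Hmk : ((n - a) * k) %% n = 1.
  have E : (n - a) * k + (1 + a * k) = k * n + 1.
    rewrite mulnBl; have : a * k <= n * k by rewrite leq_mul2r; lia.
    lia.
  have := congr1 (fun x => x %% n) E; rewrite modnMDl -modnDmr.
  move/dvdnP: Hd => [t ->]; rewrite modnMl addn0 => ->; rewrite modn_small //; lia.
exists (n - a); split => //; first lia.
have : n - a <> n - 1.
  move=> E; move: Hmk; rewrite E.
  have -> : (n - 1) * k = (k - 1) * n + (n - k).
    rewrite mulnBl mulnBl !mul1n mulnC; have : k <= k * n by rewrite leq_pmulr; lia.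
    have : n <= k * n by rewrite leq_pmull; lia.
    lia.
  rewrite modnMDl modn_small; lia.
lia.
Qed.

Lemma thresh n (g : nat -> bool) :
  (forall a b, a < b < n -> g a -> g b) ->
  exists s, s <= n /\ forall a, a < n -> g a = (s <= a).
Proof.
elim: n => [|n IH] Hm; first by exists 0.
have [s [Hs Hg]] : exists s, s <= n /\ forall a, a < n -> g a = (s <= a).
  by apply: IH => a b Hab; apply: Hm; lia.
case Egn: (g n).
  exists s; split; first lia.
  move=> a Ha; case: (ltngtP a n) => [Han||->]; [by apply: Hg|lia|].
  by rewrite Egn; apply/esym; apply/leP; lia.
exists n.+1; split => // a Ha.
have -> : (n.+1 <= a) = false by apply/negbTE; rewrite -ltnNge.
apply/negbTE/negP => Ga.
case: (ltngtP a n) => Han; [|lia|].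
- by move: (Hm a n ltac:(lia) Ga); rewrite Egn.
- by move: Ga; rewrite Han Egn.
Qed.

Definition PC n m s nu := forall a b, a < b < n -> (s <= a) = (s <= b) ->
  b <> nu /\ (a <> nu -> (a + m) %% n < (b + m) %% n).

Lemma mod_lt n m a b : a < b < n -> m < n -> (b < n - m \/ n - m <= a) ->
  (a + m) %% n < (b + m) %% n.
Proof.
move=> Hab Hm [H|H].
  by rewrite !modn_small; lia.
have Ea : a + m = (a + m - n) + n by lia.
have Eb : b + m = (b + m - n) + n by lia.
rewrite Ea Eb !modnDr !modn_small; lia.
Qed.

Lemma PC1 n m : 1 <= m <= n - 2 -> PC n m (n - m) 0.
Proof.
move=> Hm a b Hab E; split; first lia.
move=> Ha; apply: mod_lt => //; first lia.
case: (leqP (n - m) a) => H; first by right.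
by left; move: E; rewrite (leqNgt _ a) H /=; move/esym/negbT; rewrite -ltnNge.
Qed.

Lemma PC2 n m : 1 <= m <= n - 2 -> PC n m (n - m - 1) (n - m - 1).
Proof.
move=> Hm a b Hab E.
case: (leqP (n - m - 1) a) => H.
  have Hb : n - m - 1 <= b by lia.
  split; first lia.
  move=> Ha; apply: mod_lt => //; lia.
move: E; rewrite (leqNgt _ a) H /= => /esym/negbT; rewrite -ltnNge => Hb.
split; first lia.
move=> _; apply: mod_lt => //; lia.
Qed.

Lemma PC3 n m : 1 <= m <= n - 2 -> PC n m (n - m) (n - m).
Proof.
move=> Hm a b Hab E.
case: (leqP (n - m) a) => H.
  have Hb : n - m <= b by lia.
  split; first lia.
  move=> Ha; apply: mod_lt => //; lia.
move: E; rewrite (leqNgt _ a) H /= => /esym/negbT; rewrite -ltnNge => Hb.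
split; first lia.
move=> _; apply: mod_lt => //; lia.
Qed.

Lemma SA_of_PC n k m c s : 1 < n -> (m * k) %% n = 1 -> 0 < c <= n ->
  PC n m s (Rf n m c n) ->
  is_SA (ab_string n (pseq n k c) s) (pseq n k c).
Proof.
move=> Hn Hmk Hc HPC.
have HT : size (ab_string n (pseq n k c) s) = n by rewrite size_mkseq.
have G := pseq_Gen _ _ _ _ _ Hn Hmk Hc HT.
split; first by rewrite HT; exact: (pseq_perm _ _ _ _ Hn Hmk Hc).
apply/sorted_PS; rewrite size_pseq; apply: (LC_PS _ _ _ _ G).
move=> a b Hab.
have Ha : a < n by lia.
have Hb : b < n by case/andP: Hab.
rewrite !nth_pseq //.
have Ra := Pf_range n k c a (ltnW Hn); have Rb := Pf_range n k c b (ltnW Hn).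
rewrite !(ab_letter _ _ m) // !F1 //.
split; first by move=> /leP H; apply/leP; lia.
move=> E; have [Hb1 Hb2] := HPC a b Hab E.
split.
  by move=> En; apply: Hb1; have := F1 n k m c b Hn Hmk Hc Hb; rewrite En.
move=> Pan; rewrite (F4 n m c (Pf n k c a)) ?(F4 n m c (Pf n k c b)) ?F1 //; try lia.
apply: Hb2 => Ea; apply: Pan; rewrite Ea.
by have [_ ->] := F2 n k m c n Hn Hmk Hc ltac:(lia).
Qed.

Lemma mod_target n X Y Z : Z < n -> (X + Y) %% n = 0 -> (Z + Y) %% n = 0 ->
  X %% n = Z.
Proof.
move=> HZ H1 H2; rewrite -(modn_small HZ); apply/eqP.
by rewrite -(eqn_modDr Y) H1 H2.
Qed.

Lemma kmj n k m j X : (m * k) %% n = 1 ->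
  (j * (k * m) + X) %% n = (j + X) %% n.
Proof. by move=> H; rewrite -modnDml -modnMmr (mulnC k m) H muln1 modnDml. Qed.

Lemma nmul n q : (n * q) %% n = 0.
Proof. by rewrite modnMr. Qed.

Lemma V1a n m : Rf n m n n = 0.
Proof.
rewrite /Rf; have -> : n.-1 + n - n.-1 = n by lia.
by rewrite modnMr.
Qed.

Lemma V1b n k m : 2 < n -> 1 <= k <= n - 2 -> (m * k) %% n = 1 ->
  1 <= m <= n - 2 -> Rf n m n (n - k - 1) = n - m - 1.
Proof.
move=> Hn Hk Hmk Hm; rewrite /Rf.
apply: (mod_target _ _ (k * m + m)); first lia.
  have -> : (n - k - 1).-1 + n - n.-1 = n - k - 1 by lia.
  have -> : (n - k - 1) * m + (k * m + m) = n * m.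
    rewrite -mulSnr -mulnDl; congr (_ * _); lia.
  exact: nmul.
have -> : n - m - 1 + (k * m + m) = 1 * (k * m) + (n - 1) by lia.
rewrite (kmj _ _ _ _ _ Hmk).
have -> : 1 + (n - 1) = n by lia.
by rewrite modnn.
Qed.

Lemma VT n k m A j r Z q : (m * k) %% n = 1 -> Z < n ->
  A + (j * k + r) = n * q -> (Z + r * m + j) %% n = 0 -> (A * m) %% n = Z.
Proof.
move=> Hmk HZ E1 E2.
apply: (mod_target _ _ ((j * k + r) * m)) => //.
  by rewrite -mulnDl E1 -mulnA nmul.
by rewrite mulnDl -mulnA addnCA kmj // addnC.
Qed.

Lemma V2a n k m : 2 < n -> 1 <= k <= n - 2 -> (m * k) %% n = 1 ->
  1 <= m <= n - 2 -> Rf n m (k + 1) n = n - m - 1.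
Proof.
move=> Hn Hk Hmk Hm; apply: (VT _ k _ _ 1 1 _ 2) => //; try lia.
by rewrite (_ : n - m - 1 + 1 * m + 1 = n) ?modnn //; lia.
Qed.

Lemma V2b n k m : 2 < n -> 1 <= k <= n - 2 -> (m * k) %% n = 1 ->
  1 <= m <= n - 2 -> Rf n m (k + 1) (n - k) = n - m - 2.
Proof.
move=> Hn Hk Hmk Hm; apply: (VT _ k _ _ 2 1 _ 2) => //; try lia.
by rewrite (_ : n - m - 2 + 1 * m + 2 = n) ?modnn //; lia.
Qed.

Lemma V3a n k m : 2 < n -> 1 <= k <= n - 2 -> (m * k) %% n = 1 ->
  1 <= m <= n - 2 -> Rf n m 1 n = n - m.
Proof.
move=> Hn Hk Hmk Hm; apply: (VT _ k _ _ 0 1 _ 2) => //; try lia.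
by rewrite (_ : n - m + 1 * m + 0 = n) ?modnn //; lia.
Qed.

Lemma V3b n k m : 2 < n -> 1 <= k <= n - 2 -> (m * k) %% n = 1 ->
  1 <= m <= n - 2 -> Rf n m 1 (n - k) = n - m - 1.
Proof.
move=> Hn Hk Hmk Hm; apply: (VT _ k _ _ 1 1 _ 2) => //; try lia.
by rewrite (_ : n - m - 1 + 1 * m + 1 = n) ?modnn //; lia.
Qed.

Lemma D2 n k m : 2 < n -> 1 <= k <= n - 2 -> (m * k) %% n = 1 ->
  1 <= m <= n - 2 -> Rf n m (k + 1) 1 = n - 1.
Proof.
move=> Hn Hk Hmk Hm; apply: (VT _ k _ _ 1 0 _ 1) => //; try lia.
by rewrite (_ : n - 1 + 0 * m + 1 = n) ?modnn //; lia.
Qed.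

Lemma D3 n k m : 2 < n -> 1 <= k <= n - 2 -> (m * k) %% n = 1 ->
  1 <= m <= n - 2 -> Rf n m 1 1 = 0.
Proof.
move=> Hn Hk Hmk Hm; apply: (VT _ k _ _ 0 0 _ 1) => //; try lia.
by rewrite (_ : 0 + 0 * m + 0 = 0) ?mod0n //; lia.
Qed.

Lemma C1 n k m : 2 < n -> 1 <= k <= n - 2 -> (m * k) %% n = 1 ->
  1 <= m <= n - 2 -> Rf n m n (n - 1) = n - m.
Proof.
move=> Hn Hk Hmk Hm; apply: (VT _ k _ _ 0 1 _ 1) => //; try lia.
by rewrite (_ : n - m + 1 * m + 0 = n) ?modnn //; lia.
Qed.

Lemma c_unique n k m c c' : 1 < n -> (m * k) %% n = 1 -> 0 < c <= n ->
  0 < c' <= n -> Rf n m c n = Rf n m c' n -> c = c'.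
Proof.
move=> Hn Hmk Hc Hc' E.
have [_ H1] := F2 n k m c n Hn Hmk Hc ltac:(lia).
have [_ H2] := F2 n k m c' n Hn Hmk Hc' ltac:(lia).
have H3 : Pf n k c (Rf n m c' n) = Pf n k c' (Rf n m c' n) by rewrite -E H1 E H2.
move: (succn_inj H3) => /eqP; rewrite eqn_modDr !modn_small; lia.
Qed.

Lemma forward n k m T p : 2 < n -> 1 <= k <= n - 2 -> (m * k) %% n = 1 ->
  1 <= m <= n - 2 -> size T = n -> is_SA T p -> is_APP n k p ->
  exists c s, [/\ 0 < c <= n, p = pseq n k c, T = ab_string n p s &
   (Rf n m c n = 0 /\ s = n - m) \/ (Rf n m c n = n - m - 1 /\ s = n - m - 1)
   \/ (Rf n m c n = n - m /\ s = n - m)].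
Proof.
move=> Hn3 Hk Hmk Hm HT [_ Hsort] HA.
have Hn : 1 < n by lia.
have [Hc Ep] := APP_pseq n k p ltac:(lia) HA.
move: Hc Ep; set c := nth 0 p 0 => Hc Ep.
exists c; rewrite Ep in Hsort *.
have G := pseq_Gen T n k m c Hn Hmk Hc HT.
have PS : forall a b, a < b < n ->
   lex_lt (sfx T (nth 0 (pseq n k c) a)) (sfx T (nth 0 (pseq n k c) b)).
  by move: Hsort => /sorted_PS; rewrite size_pseq.
have LCH := PS_LC _ _ _ _ G PS.
pose g a := nth false T (nth 0 (pseq n k c) a).-1.
have [s [Hs Hg]] := thresh n g (fun a b Hab => (LCH a b Hab).1).
exists s.
have ET : T = ab_string n (pseq n k c) s.
  apply: (@eq_from_nth _ false); first by rewrite HT size_mkseq.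
  move=> u; rewrite HT => Hu.
  have [H1 H2] := F2 n k m c u.+1 Hn Hmk Hc ltac:(lia).
  rewrite -[u in RHS]/(u.+1.-1) (ab_letter _ _ m) //; try lia.
  by rewrite -Hg // /g nth_pseq // H2.
split => //.
set nu := Rf n m c n.
have [Hnu Pnu] := F2 n k m c n Hn Hmk Hc ltac:(lia).
have HL : forall a b, a < b < n -> (s <= a) = (s <= b) ->
    Pf n k c b <> n /\
    (Pf n k c a <> n -> Rf n m c (Pf n k c a).+1 < Rf n m c (Pf n k c b).+1).
  move=> a b Hab E.
  have := (LCH a b Hab).2; rewrite !nth_pseq //; try lia; apply.
  by move: (Hg a ltac:(lia)) (Hg b ltac:(lia)); rewrite /g !nth_pseq //; try lia;
     move=> -> ->.
have I1 : nu = 0 \/ s = nu.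
  case: (posnP nu) => Hnu0; first by left.
  right; case: (eqVneq s nu) => // /eqP Hsnu; exfalso.
  have E : (s <= nu - 1) = (s <= nu).
    by apply/idP/idP => /leP H; apply/leP; lia.
  have [H _] := HL (nu - 1) nu ltac:(lia) E.
  exact: H.
have I2 : s = n - m \/ nu = n - m - 1.
  case: (eqVneq s (n - m)) => Hsw; first by left.
  right; case: (eqVneq nu (n - m - 1)) => // /eqP Hnuw; exfalso.
  have E : (s <= n - m - 1) = (s <= n - m).
    by apply/idP/idP => /leP H; apply/leP; lia.
  have [Hb Ha] := HL (n - m - 1) (n - m) ltac:(lia) E.
  have Pan : Pf n k c (n - m - 1) <> n.
    move=> En; apply: Hnuw; have := F1 n k m c (n - m - 1) Hn Hmk Hc ltac:(lia).
    by rewrite En.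
  have := Ha Pan.
  rewrite (F4 n m c (Pf n k c (n - m - 1))) ?(F4 n m c (Pf n k c (n - m)))
    ?F1 //; try lia; try (by apply: Pf_range; lia).
  rewrite (_ : n - m - 1 + m = n - 1); last lia.
  rewrite (_ : n - m + m = n); last lia.
  rewrite modnn modn_small; lia.
lia.
Qed.

Lemma shift n k m c j : 1 < n -> (m * k) %% n = 1 -> 0 < c <= n -> 0 < j ->
  k <= n -> 0 < Rf n m c j -> Rf n m c (j + (n - k)) = (Rf n m c j).-1.
Proof.
move=> Hn Hmk Hc Hj Hk Hr; move: Hr; rewrite /Rf.
have -> : (j + (n - k)).-1 + n - c.-1 = (j.-1 + n - c.-1) + (n - k) by lia.
set X := j.-1 + n - c.-1 => Hr.
have Hlt : (X * m) %% n < n by rewrite ltn_mod; lia.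
rewrite -(modn_small (_ : ((X * m) %% n).-1 < n)); last lia.
apply/eqP; rewrite -(eqn_modDr (k * m)).
have -> : (X + (n - k)) * m + k * m = X * m + n * m.
  by rewrite -mulnDl -addnA subnK // mulnDl.
rewrite addnC (mulnC n m) modnMDl -modnDmr (mulnC k m) Hmk.
rewrite (_ : ((X * m) %% n).-1 + 1 = (X * m) %% n); last lia.
by rewrite !modn_mod.
Qed.

Lemma Rf_inj n k m c j j' : 1 < n -> (m * k) %% n = 1 -> 0 < c <= n ->
  0 < j <= n -> 0 < j' <= n -> Rf n m c j = Rf n m c j' -> j = j'.
Proof.
move=> Hn Hmk Hc Hj Hj' E.
have [_ H1] := F2 n k m c j Hn Hmk Hc Hj.
have [_ H2] := F2 n k m c j' Hn Hmk Hc Hj'.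
by rewrite -H1 E H2.
Qed.

Lemma Pf0 n k c : 0 < c <= n -> Pf n k c 0 = c.
Proof. by move=> Hc; rewrite /Pf mul0n addn0 modn_small; lia. Qed.

Lemma period_gen n k m c s : 1 < n -> (m * k) %% n = 1 -> 0 < c <= n ->
  1 <= k <= n - 2 ->
  (forall j, 0 < j <= k -> Rf n m c j <> 0 /\ Rf n m c j <> s) ->
  has_period (ab_string n (pseq n k c) s) (n - k).
Proof.
move=> Hn Hmk Hc Hk Hj; rewrite /has_period size_mkseq; split; first lia.
move=> i Hi.
have [H0 Hs] := Hj i.+1 ltac:(lia).
rewrite -[i in LHS]/(i.+1.-1) (ab_letter _ _ m) //; last lia.
rewrite -[i + _]/((i.+1 + (n - k)).-1) (ab_letter _ _ m) //; try lia.
rewrite shift //; try lia.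
Qed.

Lemma Rf0 n k m c j : 1 < n -> (m * k) %% n = 1 -> 0 < c <= n ->
  0 < j <= n -> Rf n m c j = 0 -> j = c.
Proof.
move=> Hn Hmk Hc Hj E.
have [_ H1] := F2 n k m c j Hn Hmk Hc Hj.
by rewrite -H1 E Pf0.
Qed.

Lemma lyndon3 n k m s : 1 < n -> (m * k) %% n = 1 ->
  is_SA (ab_string n (pseq n k 1) s) (pseq n k 1) ->
  lyndon (ab_string n (pseq n k 1) s).
Proof.
move=> Hn Hmk [_ Hsort] r; rewrite size_mkseq => Hr.
set T := ab_string n (pseq n k 1) s.
move: Hsort => /sorted_PS; rewrite size_pseq => PS.
have Hc : 0 < 1 <= n by lia.
have [H1 H2] := F2 n k m 1 r.+1 Hn Hmk Hc ltac:(lia).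
have Hb : 0 < Rf n m 1 r.+1.
  case: (posnP (Rf n m 1 r.+1)) => // E.
  have := Rf0 n k m 1 r.+1 Hn Hmk Hc ltac:(lia) E; lia.
have := PS 0 (Rf n m 1 r.+1) ltac:(lia).
rewrite !nth_pseq // Pf0 // H2 => H.
rewrite /rot; apply: lex_cat.
  by move: H; rewrite /Defs.suffix /= drop0.
by rewrite size_drop leq_subr.
Qed.

Theorem theorem10 (n k : nat) :
  3 <= n -> 1 <= k <= n - 2 -> coprime k n ->
  exists T1 T2 T3 : seq bool,
    [/\ uniq [:: T1; T2; T3],
        (forall T : seq bool,
            (size T = n /\ exists p, is_SA T p /\ is_APP n k p)
            <-> T \in [:: T1; T2; T3]),
        (exists p s, [/\ is_SA T1 p, is_APP n k p, 1 <= s <= n - 1 &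
                         T1 = ab_string n p s]
                     /\ (nth 0 p 0 = n /\ nth 0 p s.-1 = n - k - 1))
         /\ has_period T1 (n - k),
        (exists p s, [/\ is_SA T2 p, is_APP n k p, 1 <= s <= n - 1 &
                         T2 = ab_string n p s]
                     /\ (nth 0 p 0 = k + 1 /\ nth 0 p s.-1 = n - k))
         /\ has_period T2 (n - k) &
        (exists p s, [/\ is_SA T3 p, is_APP n k p, 1 <= s <= n - 1 &
                         T3 = ab_string n p s]
                     /\ (nth 0 p 0 = 1 /\ nth 0 p s.-1 = n - k))
         /\ lyndon T3].
Proof.
move=> Hn3 Hk Hco.
have [m [Hmk Hm1 Hm2]] := inv_exists n k Hn3 Hk Hco.
have Hn : 1 < n by lia.
have Hm : 1 <= m <= n - 2 by lia.
have Hk' : 1 <= k <= n.-1 by lia.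
have Hc1 : 0 < n <= n by lia.
have Hc2 : 0 < k + 1 <= n by lia.
have Hc3 : 0 < 1 <= n by lia.
set T1 := ab_string n (pseq n k n) (n - m).
set T2 := ab_string n (pseq n k (k + 1)) (n - m - 1).
set T3 := ab_string n (pseq n k 1) (n - m).
have SA1 : is_SA T1 (pseq n k n).
  by apply: (SA_of_PC n k m) => //; rewrite V1a; exact: PC1.
have SA2 : is_SA T2 (pseq n k (k + 1)).
  by apply: (SA_of_PC n k m) => //; rewrite (V2a n k m) //; exact: PC2.
have SA3 : is_SA T3 (pseq n k 1).
  by apply: (SA_of_PC n k m) => //; rewrite (V3a n k m) //; exact: PC3.
have AP1 := pseq_APP n k m n Hn Hmk Hc1 Hk'.
have AP2 := pseq_APP n k m (k + 1) Hn Hmk Hc2 Hk'.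
have AP3 := pseq_APP n k m 1 Hn Hmk Hc3 Hk'.
have N1 : nth false T1 n.-1 = false.
  by rewrite (ab_letter _ _ m) // V1a; apply/negbTE; rewrite -ltnNge; lia.
have N2 : nth false T2 n.-1 = true.
  by rewrite (ab_letter _ _ m) // (V2a n k m) // leqnn.
have N3 : nth false T3 n.-1 = true.
  by rewrite (ab_letter _ _ m) // (V3a n k m) // leqnn.
have Z2 : nth false T2 0 = true.
  by rewrite -[0]/(1.-1) (ab_letter _ _ m) // (D2 n k m) //; apply/leP; lia.
have Z3 : nth false T3 0 = false.
  by rewrite -[0]/(1.-1) (ab_letter _ _ m) // (D3 n k m) //; apply/negbTE; rewrite -ltnNge; lia.
exists T1, T2, T3; split.
- rewrite /= !inE !negb_or andbT; apply/andP; split; [apply/andP; split|].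
  + by apply/eqP => E; move: N1; rewrite E N2.
  + by apply/eqP => E; move: N1; rewrite E N3.
  + by apply/eqP => E; move: Z2; rewrite E Z3.
- move=> T; split.
    move=> [HT [p [HSA HAP]]].
    have [c [s [Hc Ep ET Hcase]]] := forward n k m T p Hn3 Hk Hmk Hm HT HSA HAP.
    rewrite ET Ep !inE.
    case: Hcase => [[E Es]|[[E Es]|[E Es]]].
    + have Ec : c = n by apply: (c_unique n k m) => //; rewrite E V1a.
      by rewrite Ec Es eqxx.
    + have Ec : c = k + 1 by apply: (c_unique n k m) => //; rewrite E (V2a n k m).
      by rewrite Ec Es eqxx orbT.
    + have Ec : c = 1 by apply: (c_unique n k m) => //; rewrite E (V3a n k m).
      by rewrite Ec Es eqxx !orbT.
  rewrite !inE => /or3P [/eqP->|/eqP->|/eqP->]; (split; first by rewrite size_mkseq).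
  + by exists (pseq n k n).
  + by exists (pseq n k (k + 1)).
  + by exists (pseq n k 1).
- split.
    exists (pseq n k n), (n - m); split; first (split => //; lia).
    rewrite nth_pseq ?Pf0 //; split => //.
    rewrite (_ : (n - m).-1 = Rf n m n (n - k - 1)); last by rewrite V1b //; lia.
    rewrite nth_pseq; last by have [] := F2 n k m n (n - k - 1) Hn Hmk Hc1 ltac:(lia).
    by have [] := F2 n k m n (n - k - 1) Hn Hmk Hc1 ltac:(lia).
  apply: (period_gen _ _ m) => // j Hj; split.
    by move=> E; have := Rf0 n k m n j Hn Hmk Hc1 ltac:(lia) E; lia.
  rewrite -(C1 n k m) // => E.
  by have := Rf_inj n k m n j (n - 1) Hn Hmk Hc1 ltac:(lia) ltac:(lia) E; lia.
- split.
    exists (pseq n k (k + 1)), (n - m - 1); split; first (split => //; lia).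
    rewrite nth_pseq ?Pf0 //; try lia; split => //.
    rewrite (_ : (n - m - 1).-1 = Rf n m (k + 1) (n - k)); last by rewrite V2b //; lia.
    rewrite nth_pseq; last by have [] := F2 n k m (k + 1) (n - k) Hn Hmk Hc2 ltac:(lia).
    by have [] := F2 n k m (k + 1) (n - k) Hn Hmk Hc2 ltac:(lia).
  apply: (period_gen _ _ m) => // j Hj; split.
    by move=> E; have := Rf0 n k m (k + 1) j Hn Hmk Hc2 ltac:(lia) E; lia.
  rewrite -(V2a n k m) // => E.
  by have := Rf_inj n k m (k + 1) j n Hn Hmk Hc2 ltac:(lia) ltac:(lia) E; lia.
- split; last exact: (lyndon3 n k m).
  exists (pseq n k 1), (n - m); split; first (split => //; lia).
  rewrite nth_pseq ?Pf0 //; try lia; split => //.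
  rewrite (_ : (n - m).-1 = Rf n m 1 (n - k)); last by rewrite V3b //; lia.
  rewrite nth_pseq; last by have [] := F2 n k m 1 (n - k) Hn Hmk Hc3 ltac:(lia).
  by have [] := F2 n k m 1 (n - k) Hn Hmk Hc3 ltac:(lia).
Qed.
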